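(* A formula $\varphi\in\mathcal{L}$ is valid in all constructive Chellas models if and only if it is derivable in $\mathsf{ConstCK}$.
   Context: Language $\mathcal{L}$: formulas $\varphi ::= p \mid \bot \mid \varphi\wedge\varphi \mid \varphi\vee\varphi \mid \varphi\to\varphi \mid \varphi \mathrel{\Box\!\!\to} \varphi \mid \varphi \mathrel{\Diamond\!\!\to}\varphi$; $\neg\varphi:=\varphi\to\bot$, $\top:=\neg\bot$, $\varphi\leftrightarrow\psi:=(\varphi\to\psi)\wedge(\psi\to\varphi)$. $\mathsf{ConstCK}$: any axiomatisation of intuitionistic propositional logic in $\mathcal{L}$ with modus ponens, plus axioms CM$_\Box$: $(\varphi\mathrel{\Box\!\!\to}\psi\wedge\chi)\to(\varphi\mathrel{\Box\!\!\to}\psi)\wedge(\varphi\mathrel{\Box\!\!\to}\chi)$; CC$_\Box$: $(\varphi\mathrel{\Box\!\!\to}\psi)\wedge(\varphi\mathrel{\Box\!\!\to}\chi)\to(\varphi\mathrel{\Box\!\!\to}\psi\wedge\chi)$; CN$_\Box$: $\varphi\mathrel{\Box\!\!\to}\top$; CN$_\Diamond$: $\neg(\varphi\mathrel{\Diamond\!\!\to}\bot)$; CK$_\Diamond$: $(\varphi\mathrel{\Box\!\!\to}(\psi\to\chi))\to((\varphi\mathrel{\Diamond\!\!\to}\psi)\to(\varphi\mathrel{\Diamond\!\!\to}\chi))$; rules RA$_\Box$: from $\varphi\leftrightarrow\rho$ infer $(\varphi\mathrel{\Box\!\!\to}\psi)\leftrightarrow(\rho\mathrel{\Box\!\!\to}\psi)$;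 RC$_\Box$: from $\psi\leftrightarrow\chi$ infer $(\varphi\mathrel{\Box\!\!\to}\psi)\leftrightarrow(\varphi\mathrel{\Box\!\!\to}\chi)$; RA$_\Diamond$, RC$_\Diamond$: the same with $\mathrel{\Diamond\!\!\to}$. A constructive Chellas model is $M=\langle W,\le,R,V\rangle$ with $W$ a nonempty set, $\le$ a reflexive transitive relation on $W$, $V:W\to 2^{Atm}$ monotone ($w\le w'$ implies $V(w)\subseteq V(w')$), and $R$ associating to each $X\subseteq W$ a binary relation $R_X$ on $W$. Satisfaction: $w\Vdash p$ iff $p\in V(w)$; $w\not\Vdash\bot$; $\wedge,\vee$ pointwise; $w\Vdash\varphi\to\psi$ iff for all $w'\ge w$, $w'\Vdash\varphi$ implies $w'\Vdash\psi$; with $[\varphi]=\{w\mid w\Vdash\varphi\}$: $w\Vdash\varphi\mathrel{\Box\!\!\to}\psi$ iff for all $w',v$ with $w\le w'$ and $w'R_{[\varphi]}v$, $v\Vdash\psi$; $w\Vdash\varphi\mathrel{\Diamond\!\!\to}\psi$ iff for all $w'\ge w$ there is $v$ with $w'R_{[\varphi]}v$ and $v\Vdash\psi$. A formula is valid in $M$ if satisfied at every world of $M$. *)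

(* Defs.v *)
Inductive form : Type :=
| Atom : nat -> form
| Bot : form
| And : form -> form -> form
| Or : form -> form -> form
| Imp : form -> form -> form
| CBox : form -> form -> form
| CDia : form -> form -> form.

Definition Neg (p : form) : form := Imp p Bot.
Definition Top : form := Neg Bot.
Definition Iff (p q : form) : form := And (Imp p q) (Imp q p).

Inductive ConstCK : form -> Prop :=
| ax_K  : forall p q, ConstCK (Imp p (Imp q p))
| ax_S  : forall p q r, ConstCK (Imp (Imp p (Imp q r)) (Imp (Imp p q) (Imp p r)))
| ax_A1 : forall p q, ConstCK (Imp (And p q) p)
| ax_A2 : forall p q, ConstCK (Imp (And p q) q)
| ax_A3 : forall p q, ConstCK (Imp p (Imp q (And p q)))
| ax_O1 : forall p q, ConstCK (Imp p (Or p q))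
| ax_O2 : forall p q, ConstCK (Imp q (Or p q))
| ax_O3 : forall p q r, ConstCK (Imp (Imp p r) (Imp (Imp q r) (Imp (Or p q) r)))
| ax_EFQ : forall p, ConstCK (Imp Bot p)
| r_MP : forall p q, ConstCK (Imp p q) -> ConstCK p -> ConstCK q
| ax_CMbox : forall p q r,
    ConstCK (Imp (CBox p (And q r)) (And (CBox p q) (CBox p r)))
| ax_CCbox : forall p q r,
    ConstCK (Imp (And (CBox p q) (CBox p r)) (CBox p (And q r)))
| ax_CNbox : forall p, ConstCK (CBox p Top)
| ax_CNdia : forall p, ConstCK (Neg (CDia p Bot))
| ax_CKdia : forall p q r,
    ConstCK (Imp (CBox p (Imp q r)) (Imp (CDia p q) (CDia p r)))
| r_RAbox : forall p r q, ConstCK (Iff p r) -> ConstCK (Iff (CBox p q) (CBox r q))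
| r_RCbox : forall p q r, ConstCK (Iff q r) -> ConstCK (Iff (CBox p q) (CBox p r))
| r_RAdia : forall p r q, ConstCK (Iff p r) -> ConstCK (Iff (CDia p q) (CDia r q))
| r_RCdia : forall p q r, ConstCK (Iff q r) -> ConstCK (Iff (CDia p q) (CDia p r)).

Record model : Type := {
  W : Type;
  W_nonempty : inhabited W;
  le : W -> W -> Prop;
  le_refl : forall w, le w w;
  le_trans : forall u v w, le u v -> le v w -> le u w;
  R : (W -> Prop) -> W -> W -> Prop;
  V : W -> nat -> Prop;
  V_mono : forall w w' p, le w w' -> V w p -> V w' p
}.

Fixpoint sat (M : model) (w : W M) (f : form) {struct f} : Prop :=
  match f with
  | Atom p => V M w p
  | Bot => False
  | And a b => sat M w a /\ sat M w b
  | Or a b => sat M w a \/ sat M w b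
  | Imp a b => forall w', le M w w' -> sat M w' a -> sat M w' b
  | CBox a b => forall w' v, le M w w' -> R M (fun u => sat M u a) w' v -> sat M v b
  | CDia a b => forall w', le M w w' -> exists v, R M (fun u => sat M u a) w' v /\ sat M v b
  end.

Definition valid_in (M : model) (f : form) : Prop := forall w : W M, sat M w f.

(* Main.v *)
Require Import Defs.
From Stdlib Require Import Classical PeanoNat Lia Cantor FunctionalExtensionality PropExtensionality.

Lemma persist (M : model) (f : form) : forall w w', le M w w' -> sat M w f -> sat M w' f.
Proof.
  induction f; simpl; intros w w' Hle H.
  - eapply V_mono; eauto.
  - exact H.
  - destruct H; split; eauto.
  - destruct H; [left|right]; eauto.
  - intros u Hu. apply H. eapply le_trans; eauto.
  - intros u v Hu. apply H. eapply le_trans; eauto.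
  - intros u Hu. apply H. eapply le_trans; eauto.
Qed.

Lemma sat_iff_ext (M : model) p r :
  (forall w, sat M w (Iff p r)) -> (fun u => sat M u p) = (fun u => sat M u r).
Proof.
  intros H. apply functional_extensionality; intro u.
  apply propositional_extensionality. destruct (H u) as [H1 H2]. split.
  - intro; apply (H1 u); auto using le_refl.
  - intro; apply (H2 u); auto using le_refl.
Qed.

Lemma soundness : forall phi, ConstCK phi -> forall M, valid_in M phi.
Proof.
  intros phi D. induction D; intros M w; simpl.
  - intros w1 _ H1 w2 H12 _. eapply persist; eauto.
  - intros w1 _ H1 w2 H12 H2 w3 H23 H3.
    assert (H13 : le M w1 w3) by (eapply le_trans; eauto).
    apply (H1 w3 H13 H3 w3 (le_refl _ _) (H2 w3 H23 H3)).
  - intros w1 _ [H _]; exact H.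
  - intros w1 _ [_ H]; exact H.
  - intros w1 _ H1 w2 H12 H2. split; [eapply persist; eauto | exact H2].
  - intros w1 _ H; left; exact H.
  - intros w1 _ H; right; exact H.
  - intros w1 _ H1 w2 H12 H2 w3 H23 [H3|H3].
    + apply (H1 w3 (le_trans _ _ _ _ H12 H23) H3).
    + apply (H2 w3 H23 H3).
  - intros w1 _ [].
  - pose proof (IHD1 M w) as H1. simpl in H1. apply (H1 w (le_refl _ _) (IHD2 M w)).
  - intros w1 _ H1. split; intros u v Hu Hv; destruct (H1 u v Hu Hv); auto.
  - intros w1 _ [H1 H2] u v Hu Hv. split; eauto.
  - intros u v _ _ w1 _ H; exact H.
  - intros w1 _ H. destruct (H w1 (le_refl _ _)) as [v [_ []]].
  - intros w1 _ H1 w2 H12 H2 w3 H23.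
    destruct (H2 w3 H23) as [v [Hv Hs]]. exists v; split; auto.
    apply (H1 w3 v (le_trans _ _ _ _ H12 H23) Hv v (le_refl _ _) Hs).
  - rewrite (sat_iff_ext M p r (IHD M)). split; intros w1 _ H; exact H.
  - assert (E : forall u, sat M u q <-> sat M u r).
    { intro u; destruct (IHD M u) as [H1 H2]; split; intro;
      [apply (H1 u) | apply (H2 u)]; auto using le_refl. }
    split; intros w1 _ H u v Hu Hv; apply E; eapply H; eauto.
  - rewrite (sat_iff_ext M p r (IHD M)). split; intros w1 _ H; exact H.
  - assert (E : forall u, sat M u q <-> sat M u r).
    { intro u; destruct (IHD M u) as [H1 H2]; split; intro;
      [apply (H1 u) | apply (H2 u)]; auto using le_refl. }
    split; intros w1 _ H u Hu; destruct (H u Hu) as [v [Hv Hs]]; exists v; split; auto; apply E; auto.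
Qed.
Inductive Der (G : form -> Prop) : form -> Prop :=
| Dhyp : forall x, G x -> Der G x
| Dthm : forall x, ConstCK x -> Der G x
| Dmp : forall x y, Der G (Imp x y) -> Der G x -> Der G y.

Definition ext (G : form -> Prop) (a : form) : form -> Prop := fun z => G z \/ z = a.
Definition empty : form -> Prop := fun _ => False.

Lemma imp_refl p : ConstCK (Imp p p).
Proof.
  apply (r_MP _ _ (r_MP _ _ (ax_S p (Imp p p) p) (ax_K p (Imp p p))) (ax_K p p)).
Qed.

Lemma Der_mono G G' x : Der G x -> (forall z, G z -> G' z) -> Der G' x.
Proof. induction 1; intros; [apply Dhyp; auto | apply Dthm; auto | eapply Dmp; eauto]. Qed.

Lemma deduction G a y : Der (ext G a) y -> Der G (Imp a y).
Proof.
  induction 1 as [x [Hx|Hx]|x Hx|x y _ IH1 _ IH2].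
  - eapply Dmp; [apply Dthm, ax_K | apply Dhyp; auto].
  - subst; apply Dthm, imp_refl.
  - eapply Dmp; [apply Dthm, ax_K | apply Dthm; auto].
  - eapply Dmp; [eapply Dmp; [apply Dthm, ax_S | exact IH1] | exact IH2].
Qed.

Lemma undeduction G a y : Der G (Imp a y) -> Der (ext G a) y.
Proof.
  intro H. eapply Dmp; [eapply Der_mono; [exact H| intros; left; auto] | apply Dhyp; right; auto].
Qed.

Lemma Der_empty x : Der empty x -> ConstCK x.
Proof. induction 1; [contradiction | auto | eapply r_MP; eauto]. Qed.

Lemma thm_of a b : Der (ext empty a) b -> ConstCK (Imp a b).
Proof. intro H. apply Der_empty, deduction, H. Qed.

Lemma Dand G a b : Der G a -> Der G b -> Der G (And a b).
Proof. intros; eapply Dmp; [eapply Dmp; [apply Dthm, ax_A3|]|]; eauto. Qed.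
Lemma Dand1 G a b : Der G (And a b) -> Der G a.
Proof. intros; eapply Dmp; [apply Dthm, ax_A1|]; eauto. Qed.
Lemma Dand2 G a b : Der G (And a b) -> Der G b.
Proof. intros; eapply Dmp; [apply Dthm, ax_A2|]; eauto. Qed.
Lemma Dlast G a : Der (ext G a) a.
Proof. apply Dhyp; right; auto. Qed.

Lemma Iff_intro a b : ConstCK (Imp a b) -> ConstCK (Imp b a) -> ConstCK (Iff a b).
Proof. intros; eapply r_MP; [eapply r_MP; [apply ax_A3|]|]; eauto. Qed.
Lemma Iff1 a b : ConstCK (Iff a b) -> ConstCK (Imp a b).
Proof. intros; eapply r_MP; [apply ax_A1|]; eauto. Qed.
Lemma Iff2 a b : ConstCK (Iff a b) -> ConstCK (Imp b a).
Proof. intros; eapply r_MP; [apply ax_A2|]; eauto. Qed.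
Lemma Iff_sym a b : ConstCK (Iff a b) -> ConstCK (Iff b a).
Proof. intros; apply Iff_intro; [apply Iff2|apply Iff1]; auto. Qed.

Definition pr (x y : nat) : nat := Cantor.to_nat (x, y).
Lemma pr_inj x y x' y' : pr x y = pr x' y' -> x = x' /\ y = y'.
Proof.
  unfold pr; intro H. pose proof (f_equal Cantor.of_nat H) as H'.
  rewrite !Cantor.cancel_of_to in H'. inversion H'; auto.
Qed.

Fixpoint code (f : form) : nat :=
  match f with
  | Atom n => pr 0 n
  | Bot => pr 1 0
  | And a b => pr 2 (pr (code a) (code b))
  | Or a b => pr 3 (pr (code a) (code b))
  | Imp a b => pr 4 (pr (code a) (code b))
  | CBox a b => pr 5 (pr (code a) (code b))
  | CDia a b => pr 6 (pr (code a) (code b))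
  end.

Lemma code_inj : forall f g, code f = code g -> f = g.
Proof.
  induction f; destruct g; simpl; intro H;
  repeat match goal with
  | H : pr _ _ = pr _ _ |- _ => apply pr_inj in H; destruct H as [? ?]
  end; try discriminate; subst; try reflexivity;
  f_equal; auto.
Qed.

Section Lind.
Variable G : form -> Prop.
Variable a : form.

Fixpoint chain (n : nat) : form -> Prop :=
  match n with
  | 0 => G
  | S n => fun x => chain n x \/ (code x = n /\ ~ Der (ext (chain n) x) a)
  end.

Definition limit : form -> Prop := fun x => exists n, chain n x.

Lemma chain_mono n m : n <= m -> forall x, chain n x -> chain m x.
Proof. induction 1; simpl; auto. Qed.

Lemma chain_ok (H0 : ~ Der G a) n : ~ Der (chain n) a.
Proof.
  induction n; simpl; auto.
  destruct (classic (exists x, code x = n /\ ~ Der (ext (chain n) x) a)) as [[x [Hc Hx]]|Hn].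
  - intro D. apply Hx. eapply Der_mono; [exact D|].
    intros z [Hz|[Hz1 Hz2]]; [left; auto| right]. apply code_inj; congruence.
  - intro D. apply IHn. eapply Der_mono; [exact D|].
    intros z [Hz|[Hz1 Hz2]]; auto. exfalso; apply Hn; eauto.
Qed.

Lemma limit_compact x : Der limit x -> exists n, Der (chain n) x.
Proof.
  induction 1 as [x [n Hn]|x Hx|x y _ [n1 H1] _ [n2 H2]].
  - exists n; apply Dhyp; auto.
  - exists 0; apply Dthm; auto.
  - exists (max n1 n2). eapply Dmp.
    + eapply Der_mono; [exact H1|]. apply chain_mono; lia.
    + eapply Der_mono; [exact H2|]. apply chain_mono; lia.
Qed.

Hypothesis H0 : ~ Der G a.

Lemma limit_ok : ~ Der limit a.
Proof. intro D. destruct (limit_compact _ D) as [n Hn]. exact (chain_ok H0 n Hn). Qed.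

Lemma limit_sub x : G x -> limit x.
Proof. intro; exists 0; auto. Qed.

Lemma limit_out x : ~ limit x -> Der (ext limit x) a.
Proof.
  intro Hx. apply NNPP; intro Hd. apply Hx. exists (S (code x)). simpl. right. split; auto.
  intro D; apply Hd. eapply Der_mono; [exact D|]. intros z [Hz|Hz]; [left; exists (code x); auto|right; auto].
Qed.

Lemma limit_closed x : Der limit x -> limit x.
Proof.
  intro D. apply NNPP; intro Hx. apply limit_ok.
  eapply Dmp; [apply deduction, limit_out; exact Hx | exact D].
Qed.

Lemma limit_prime x y : limit (Or x y) -> limit x \/ limit y.
Proof.
  intro H. apply NNPP; intro Hn. apply limit_ok.
  assert (Hx : ~ limit x) by tauto. assert (Hy : ~ limit y) by tauto.
  eapply Dmp; [eapply Dmp; [eapply Dmp; [apply Dthm, ax_O3|]|]|].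
  - apply deduction, limit_out; exact Hx.
  - apply deduction, limit_out; exact Hy.
  - apply Dhyp; auto.
Qed.
End Lind.

Lemma prime_ext G a : ~ Der G a ->
  exists D : form -> Prop, (forall x, G x -> D x) /\ (forall x, Der D x -> D x) /\
    (forall x y, D (Or x y) -> D x \/ D y) /\ ~ D a.
Proof.
  intro H. exists (limit G a). split; [apply limit_sub|]. split; [apply limit_closed; auto|].
  split; [apply limit_prime; auto|]. intro Ha. apply (limit_ok G a H), Dhyp, Ha.
Qed.
Record cw : Type := {
  th : form -> Prop;
  th_closed : forall x, Der th x -> th x;
  th_prime : forall x y, th (Or x y) -> th x \/ th y;
  th_cons : ~ th Bot;
  tg1 : form; tg2 : form;
  tg_ok : ~ th (CDia tg1 tg2)
}.

Lemma th_thm (w : cw) x : ConstCK x -> th w x.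
Proof. intro; apply th_closed, Dthm; auto. Qed.
Lemma th_mp (w : cw) x y : th w (Imp x y) -> th w x -> th w y.
Proof. intros; apply th_closed; eapply Dmp; apply Dhyp; eauto. Qed.

Lemma no_diabot (D : form -> Prop) c : (forall x, Der D x -> D x) -> ~ D Bot -> ~ D (CDia c Bot).
Proof.
  intros Hc Hb H. apply Hb, Hc. eapply Dmp; [apply Dthm, ax_CNdia| apply Dhyp; exact H].
Qed.

Lemma mkworld G a : ~ Der G a -> exists w : cw, (forall x, G x -> th w x) /\ ~ th w a.
Proof.
  intro H. destruct (prime_ext G a H) as [D [H1 [H2 [H3 H4]]]].
  assert (Hb : ~ D Bot).
  { intro Hb. apply H4, H2. eapply Dmp; [apply Dthm, ax_EFQ| apply Dhyp; exact Hb]. }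
  exists (Build_cw D H2 H3 Hb Bot Bot (no_diabot D Bot H2 Hb)). simpl; auto.
Qed.

Lemma retag (w : cw) c d : ~ th w (CDia c d) -> exists w' : cw, th w' = th w /\ tg1 w' = c /\ tg2 w' = d.
Proof.
  intro H. exists (Build_cw (th w) (th_closed w) (th_prime w) (th_cons w) c d H). auto.
Qed.

Definition boxset (c : form) (G : form -> Prop) : form -> Prop := fun t => G (CBox c t).

Lemma top_thm : ConstCK Top.
Proof. apply imp_refl. Qed.

Lemma box_thm c t : ConstCK t -> ConstCK (CBox c t).
Proof.
  intro H. eapply r_MP; [apply Iff1, r_RCbox, Iff_intro|apply ax_CNbox].
  - eapply r_MP; [apply ax_K| exact H].
  - eapply r_MP; [apply ax_K| exact top_thm].
Qed.

Lemma box_lemma (G : form -> Prop) c t : (forall x, Der G x -> G x) ->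
  Der (boxset c G) t -> G (CBox c t).
Proof.
  intros Hc D. induction D as [x Hx|x Hx|x y _ IH1 _ IH2].
  - exact Hx.
  - apply Hc, Dthm, box_thm; auto.
  -
    set (A := And (Imp x y) x).
    assert (E : ConstCK (Iff A (And A y))).
    { apply Iff_intro; apply thm_of.
      - apply Dand; [apply Dlast|]. eapply Dmp; [eapply Dand1|eapply Dand2]; apply Dlast.
      - eapply Dand1; apply Dlast. }
    assert (HA : G (CBox c A)).
    { apply Hc. eapply Dmp; [apply Dthm, ax_CCbox|]. apply Dand; apply Dhyp; auto. }
    assert (HAy : G (CBox c (And A y))).
    { apply Hc. eapply Dmp; [apply Dthm, Iff1, r_RCbox, E| apply Dhyp; auto]. }
    apply Hc. eapply Dand2. eapply Dmp; [apply Dthm, ax_CMbox| apply Dhyp; exact HAy].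
Qed.

Definition cle (w w' : cw) : Prop := forall x, th w x -> th w' x.
Definition cR (X : cw -> Prop) (w v : cw) : Prop :=
  exists c, (forall u, X u <-> th u c) /\ (forall t, th w (CBox c t) -> th v t) /\
            (ConstCK (Iff c (tg1 w)) -> ~ th v (tg2 w)).

Lemma not_der_bot : ~ ConstCK Bot.
Proof.
  intro H.
  set (M := {| W := unit; W_nonempty := inhabits tt; le := fun _ _ => True;
               le_refl := fun _ => I; le_trans := fun _ _ _ _ _ => I;
               R := fun _ _ _ => False; V := fun _ _ => False;
               V_mono := fun _ _ _ _ h => h |}).
  exact (soundness Bot H M tt).
Qed.

Lemma cw_inh : inhabited cw.
Proof.
  destruct (mkworld empty Bot) as [w _].
  - intro D; apply not_der_bot, Der_empty, D.
  - exact (inhabits w).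
Qed.

Definition CM : model := {| W := cw; W_nonempty := cw_inh; le := cle;
  le_refl := fun w x h => h; le_trans := fun u v w h1 h2 x h => h2 x (h1 x h);
  R := cR; V := fun w n => th w (Atom n); V_mono := fun w w' p h1 h2 => h1 _ h2 |}.

Lemma same_ext a c : (forall u : cw, th u a <-> th u c) -> ConstCK (Iff a c).
Proof.
  intro H.
  assert (K : forall a c, (forall u : cw, th u a -> th u c) -> ConstCK (Imp a c)).
  { clear. intros a c H. apply NNPP; intro Hn.
    destruct (mkworld (ext empty a) c) as [u [Hu1 Hu2]].
    - intro D; apply Hn, thm_of, D.
    - apply Hu2, H, Hu1. right; auto. }
  apply Iff_intro; apply K; intro u; apply H.
Qed.

Lemma truth : forall f (w : cw), sat CM w f <-> th w f.
Proof.
  induction f as [n| |a IHa b IHb|a IHa b IHb|a IHa b IHb|a IHa b IHb|a IHa b IHb]; intro w; simpl.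
  - tauto.
  - split; [tauto| apply th_cons].
  - rewrite IHa, IHb. split.
    + intros [H1 H2]; apply th_closed, Dand; apply Dhyp; auto.
    + intro H; split; apply th_closed; [eapply Dand1|eapply Dand2]; apply Dhyp; exact H.
  - rewrite IHa, IHb. split.
    + intros [H|H]; apply th_closed.
      * eapply Dmp; [apply Dthm, ax_O1 | apply Dhyp; exact H].
      * eapply Dmp; [apply Dthm, ax_O2 | apply Dhyp; exact H].
    + apply th_prime.
  - split.
    + intro H. apply NNPP; intro Hn.
      destruct (mkworld (ext (th w) a) b) as [u [Hu1 Hu2]].
      * intro D; apply Hn, th_closed, deduction, D.
      * apply Hu2, IHb, H; [intros x Hx; apply Hu1; left; auto| apply IHa, Hu1; right; auto].
    + intros H w' Hle Ha. apply IHb, (th_mp w' a b); [apply Hle; auto| apply IHa; auto].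
  - split.
    + intro H. apply NNPP; intro Hn.
      destruct (retag w a Bot (no_diabot (th w) a (th_closed w) (th_cons w))) as [w' [E1 [E2 E3]]].
      destruct (mkworld (boxset a (th w)) b) as [v [Hv1 Hv2]].
      * intro D; apply Hn, box_lemma; [apply th_closed| exact D].
      * apply Hv2, IHb. apply (H w' v).
        -- intros x Hx; rewrite E1; auto.
        -- exists a. split; [intro u; apply IHa|]. split.
           ++ intros t Ht. apply Hv1. unfold boxset. rewrite <- E1. exact Ht.
           ++ intros _. rewrite E3. intro Hb. apply Hv2, th_closed.
              eapply Dmp; [apply Dthm, ax_EFQ| apply Dhyp; exact Hb].
    + intros H w' v Hle [c [Hc1 [Hc2 _]]]. apply IHb, Hc2.
      assert (E : ConstCK (Iff a c)) by (apply same_ext; intro u; rewrite <- IHa; apply Hc1).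
      apply th_mp with (CBox a b); [apply th_thm, Iff1, r_RAbox, E| apply Hle, H].
  - split.
    + intro H. apply NNPP; intro Hn.
      destruct (retag w a b Hn) as [w' [E1 [E2 E3]]].
      destruct (H w') as [v [[c [Hc1 [Hc2 Hc3]]] Hv]].
      * intros x Hx; rewrite E1; auto.
      * assert (E : ConstCK (Iff a c)) by (apply same_ext; intro u; rewrite <- IHa; apply Hc1).
        apply Hc3; [rewrite E2; apply Iff_sym, E| rewrite E3; apply IHb, Hv].
    + intros H w' Hle.
      assert (Hd : th w' (CDia a b)) by (apply Hle, H).
      set (z := tg2 w').
      assert (Hz : exists z', ~ th w' (CDia a z') /\ (ConstCK (Iff a (tg1 w')) -> z' = tg2 w')).
      { destruct (classic (ConstCK (Iff a (tg1 w')))) as [Y|N].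
        - exists (tg2 w'). split; auto. intro Hx. apply (tg_ok w').
          eapply th_mp; [apply th_thm, Iff1, r_RAdia, Y| exact Hx].
        - exists Bot. split; [apply no_diabot; [apply th_closed|apply th_cons]| tauto]. }
      destruct Hz as [z' [Hz1 Hz2]].
      destruct (mkworld (ext (boxset a (th w')) b) z') as [v [Hv1 Hv2]].
      * intro D. apply Hz1. apply deduction in D. apply box_lemma in D; [|apply th_closed].
        eapply th_mp; [eapply th_mp; [apply th_thm, ax_CKdia| exact D]| exact Hd].
      * exists v. split.
        -- exists a. split; [intro u; apply IHa|]. split.
           ++ intros t Ht; apply Hv1; left; exact Ht.
           ++ intro Y. rewrite <- (Hz2 Y). exact Hv2.
        -- apply IHb, Hv1; right; auto.
Qed.

Lemma completeness phi : (forall M : model, valid_in M phi) -> ConstCK phi.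
Proof.
  intro H. apply NNPP; intro Hn.
  destruct (mkworld empty phi) as [w [_ Hw]].
  - intro D; apply Hn, Der_empty, D.
  - apply Hw, truth, (H CM w).
Qed.

Theorem theorem9 : forall phi : form,
  (forall M : model, valid_in M phi) <-> ConstCK phi.
Proof.
  intro phi; split; [apply completeness| intros H M; apply soundness, H].
Qed.
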